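(* Assume that for all $0\le i,j\le d$: $E^*_iAE^*_j=0$ if $i-j>1$, and $E^*_iAE^*_j\ne0$ if $i-j=1$. Let $v^*_0$ be a nonzero vector in $E^*_0V$. Then the $\mathbb K$-linear map $\mathcal D\to V$, $X\mapsto Xv^*_0$, is an isomorphism of $\mathbb K$-vector spaces.
   Context: Let $\mathbb K$ be a field, $d\ge 0$ an integer, and $\mathcal A$ a $\mathbb K$-algebra isomorphic to $\mathrm{Mat}_{d+1}(\mathbb K)$, with identity $I$. An element of $\mathcal A$ is multiplicity-free if it has $d+1$ mutually distinct eigenvalues, all in $\mathbb K$; for such $A$ with eigenvalues $\theta_0,\ldots,\theta_d$, the primitive idempotent associated with $\theta_i$ is $E_i=\prod_{j\ne i}(A-\theta_jI)/(\theta_i-\theta_j)$. Standing setup: $A,A^*$ are multiplicity-free elements of $\mathcal A$ ($A^*$ is just a name, not an adjoint); $E_0,\ldots,E_d$ is an ordering of the primitive idempotents of $A$; $E^*_0,\ldots,E^*_d$ is an ordering of the primitive idempotents of $A^*$; $\mathcal D$ is the subalgebra of $\mathcal A$ generated by $A$; $V$ is an irreducible left $\mathcal A$-module. *)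

(* Defs.v *)
From HB Require Import structures.
From mathcomp Require Import all_boot all_order all_algebra.
Set Implicit Arguments. Unset Strict Implicit. Unset Printing Implicit Defensive.
Import GRing.Theory.
Local Open Scope ring_scope.

(* The ambient algebra is Mat_{d+1}(K) = 'M[K]_d.+1. *)

Definition mult_free (K : fieldType) (d : nat) (A : 'M[K]_d.+1) : Prop :=
  exists th : 'I_d.+1 -> K, injective th /\ forall i, eigenvalue A (th i).

Definition prim_idem (K : fieldType) (d : nat) (A : 'M[K]_d.+1)
  (th : 'I_d.+1 -> K) (i : 'I_d.+1) : 'M[K]_d.+1 :=
  \prod_(j < d.+1 | j != i) ((th i - th j)^-1 *: (A - (th j)%:M)).

(* D: the subalgebra generated by A (= polynomials in A). *)
Definition in_gen_subalg (K : fieldType) (d : nat) (A X : 'M[K]_d.+1) : Prop :=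
  exists p : {poly K}, X = horner_mx A p.

Definition is_left_module (K : fieldType) (d : nat) (V : lmodType K)
  (act : 'M[K]_d.+1 -> V -> V) : Prop :=
  [/\ forall X Y v, act (X + Y) v = act X v + act Y v,
      forall (c : K) X v, act (c *: X) v = c *: act X v,
      forall X u w, act X (u + w) = act X u + act X w &
      forall X (c : K) u, act X (c *: u) = c *: act X u] /\
  [/\ forall v, act 1%:M v = v
    & forall X Y v, act (X *m Y) v = act X (act Y v)].

Definition is_submodule (K : fieldType) (d : nat) (V : lmodType K)
  (act : 'M[K]_d.+1 -> V -> V) (S : V -> Prop) : Prop :=
  [/\ S 0, forall u w, S u -> S w -> S (u + w),
      forall (c : K) u, S u -> S (c *: u)
    & forall X u, S u -> S (act X u)].

Definition irreducible_module (K : fieldType) (d : nat) (V : lmodType K)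
  (act : 'M[K]_d.+1 -> V -> V) : Prop :=
  is_left_module act /\ (exists v : V, v != 0) /\
  forall S : V -> Prop, is_submodule act S ->
    (forall v, S v -> v = 0) \/ (forall v, S v).

(* Main.v *)
Require Import Defs.
From HB Require Import structures.
From mathcomp Require Import all_boot all_order all_algebra.
Import GRing.Theory.
Local Open Scope ring_scope.


Lemma eig_idem (K : fieldType) (d : nat) (As : 'M[K]_d.+1) (ths : 'I_d.+1 -> K)
  (x : 'rV[K]_d.+1) (j : 'I_d.+1) :
  injective ths -> x *m As = ths j *: x -> forall i,
  x *m prim_idem As ths i = (j == i)%:R *: x.
Proof.
move=> inj Hx i; rewrite /prim_idem.
have -> : x *m (\prod_(k < d.+1 | k != i) ((ths i - ths k)^-1 *: (As - (ths k)%:M)))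
   = (\prod_(k < d.+1 | k != i) ((ths i - ths k)^-1 * (ths j - ths k))) *: x.
  apply: (big_ind2 (fun c M => x *m M = c *: x)).
  - by rewrite mulmx1 scale1r.
  - move=> a M b N HM HN; rewrite -mulmxE mulmxA HM -scalemxAl HN scalerA.
    by rewrite mulrC.
  - move=> k _; rewrite -scalemxAr mulmxBr Hx mul_mx_scalar -scalerBl scalerA.
    by [].
have [<-|nji] := eqVneq j i.
  rewrite big1 ?scale1r // => k ki; rewrite mulVf // subr_eq0.
  by apply: contra ki => /eqP /inj ->.
rewrite (bigD1 j) //= subrr mulr0 mul0r !scale0r //.
Qed.


Lemma idem_decomp (K : fieldType) (d : nat) (As : 'M[K]_d.+1) (ths : 'I_d.+1 -> K) :
  injective ths -> (forall i, eigenvalue As (ths i)) ->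
  exists P : 'M[K]_d.+1, P \in unitmx /\
    forall i, prim_idem As ths i = invmx P *m delta_mx i i *m P.
Proof.
move=> inj Heig.
have Hx : forall i, exists x : 'rV[K]_d.+1, (x *m As == ths i *: x) && (x != 0).
  by move=> i; case/eigenvalueP: (Heig i) => x H1 H2; exists x; rewrite H1 eqxx.
pose x i := xchoose (Hx i).
have xE i : x i *m As = ths i *: x i by case/andP: (xchooseP (Hx i)) => /eqP.
have xnz i : x i != 0 by case/andP: (xchooseP (Hx i)).
pose P := \matrix_(j < d.+1) x j.
have rowPj j : row j P = x j by rewrite rowK.
have ei j i : x j *m prim_idem As ths i = (j == i)%:R *: x j.
  exact: (@eig_idem K d As ths (x j) j inj (xE j) i).
have PE i : P *m prim_idem As ths i = delta_mx i i *m P.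
  apply/row_matrixP => j; rewrite row_mul rowPj ei row_mul.
  have -> : row j (delta_mx i i : 'M[K]_d.+1) = (j == i)%:R *: delta_mx 0 i.
    apply/rowP => k; rewrite !mxE.
    by case: (eqVneq j i) => _; rewrite ?mul1r ?mul0r.
  rewrite -scalemxAl -rowE rowPj.
  by case: eqVneq => [->|]; rewrite ?scale0r.
have Pu : P \in unitmx.
  rewrite -row_free_unit -kermx_eq0; apply/rowV0P => w /sub_kermxP wP.
  apply/rowP => i; rewrite mxE.
  have : w *m P *m prim_idem As ths i = 0 by rewrite wP mul0mx.
  rewrite [w *m P]mulmx_sum_row mulmx_suml (bigD1 i) //= big1; last first.
    by move=> j ji; rewrite rowPj -scalemxAl ei (negPf ji) scale0r scaler0.
  rewrite addr0 rowPj -scalemxAl ei eqxx scale1r => /eqP.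
  by rewrite scalemx_eq0 (negPf (xnz i)) orbF => /eqP.
exists P; split=> // i.
by rewrite -mulmxA -PE mulKmx.
Qed.


Lemma delta_sandwich (K : fieldType) (n : nat) (B : 'M[K]_n) (i j : 'I_n) :
  delta_mx i i *m B *m delta_mx j j = B i j *: delta_mx i j.
Proof.
rewrite -(mul_delta_mx (0 : 'I_1) i i) -(mul_delta_mx (0 : 'I_1) j j).
rewrite -!mulmxA [delta_mx 0 i *m _]mulmxA -rowE [row i B *m _]mulmxA -colE.
have -> : col j (row i B) = (B i j)%:M.
  by apply/matrixP => a b; rewrite !ord1 !mxE eqxx mulr1n.
by rewrite mul_scalar_mx -scalemxAr mul_delta_mx.
Qed.


Theorem corollary3p3 (K : fieldType) (d : nat) (A As : 'M[K]_d.+1)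
  (ths : 'I_d.+1 -> K) (V : lmodType K) (act : 'M[K]_d.+1 -> V -> V) :
  mult_free A ->
  injective ths -> (forall i, eigenvalue As (ths i)) ->
  irreducible_module act ->
  (forall i j : 'I_d.+1, (j.+1 < i)%N ->
     prim_idem As ths i *m A *m prim_idem As ths j = 0) ->
  (forall i j : 'I_d.+1, i = j.+1 :> nat ->
     prim_idem As ths i *m A *m prim_idem As ths j != 0) ->
  forall v0 : V, v0 != 0 ->
  (exists w : V, v0 = act (prim_idem As ths ord0) w) ->
  (forall X Y, in_gen_subalg A X -> in_gen_subalg A Y ->
     act X v0 = act Y v0 -> X = Y) /\
  (forall w : V, exists2 X, in_gen_subalg A X & act X v0 = w).
Proof.
move=> _ inj Heig [Hmod [_ Hirr]] H1 H2 v0 v0nz [w0 Hw0].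
case: Hmod => [[aD aZ aVD aVZ] [a1 aM]].
have [P [Pu EP]] := @idem_decomp K d As ths inj Heig.
pose B := P *m A *m invmx P.
have EAE (i j : 'I_d.+1) : prim_idem As ths i *m A *m prim_idem As ths j
    = invmx P *m (B i j *: delta_mx i j) *m P.
  by rewrite !EP -(@delta_sandwich K d.+1 B i j) /B !mulmxA.
have conjK (M : 'M[K]_d.+1) : P *m (invmx P *m M *m P) *m invmx P = M.
  by rewrite !mulmxA mulmxK // mulmxV // mul1mx.
have Bz (i j : 'I_d.+1) : (j.+1 < i)%N -> B i j = 0.
  move/H1; rewrite EAE => /(congr1 (fun M => P *m M *m invmx P)).
  rewrite conjK mulmx0 mul0mx => /matrixP/(_ i j).
  by rewrite !mxE !eqxx mulr1 => ->.
have Bnz (i j : 'I_d.+1) : i = j.+1 :> nat -> B i j != 0.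
  move=> Hij; apply: contra (H2 i j Hij); rewrite EAE => /eqP ->.
  by rewrite scale0r mulmx0 mul0mx.
pose u : 'cV[K]_d.+1 := col 0 (invmx P).
pose r : 'rV[K]_d.+1 := row 0 P.
have E0ur : prim_idem As ths ord0 = u *m r.
  by rewrite EP /u /r colE rowE !mulmxA -[in RHS](mulmxA (invmx P)) mul_delta_mx.
have E0E0 : prim_idem As ths ord0 *m prim_idem As ths ord0 = prim_idem As ths ord0.
  by rewrite EP !mulmxA mulmxK // -[in LHS](mulmxA (invmx P)) mul_delta_mx.
have Ev0 : act (prim_idem As ths ord0) v0 = v0 by rewrite Hw0 -aM E0E0.
have act0 X : act X 0 = 0.
  have := aVD X 0 0; rewrite addr0 => /(congr1 (fun t => t - act X 0)).
  by rewrite subrr addrK.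
have act0l v : act 0 v = 0.
  have := aD 0 0 v; rewrite addr0 => /(congr1 (fun t => t - act 0 v)).
  by rewrite subrr addrK.
have actX X : act X v0 = act (X *m u *m r) v0.
  by rewrite -{1}Ev0 -aM -mulmxA -E0ur.
have psi_inj (c : 'cV[K]_d.+1) : c != 0 -> act (c *m r) v0 != 0.
  move=> cnz; apply/eqP => Hc.
  have [i ci] : exists i, c i 0 != 0.
    case: (pickP (fun i => c i 0 != 0)) => [i ci|Hall]; first by exists i.
    case/negP: cnz; apply/eqP/matrixP => a b; rewrite ord1 mxE.
    by move: (Hall a) => /negbFE/eqP.
  pose M := (c i 0)^-1 *: (u *m delta_mx 0 i).
  have Mc : M *m c = u.
    rewrite /M -scalemxAl -mulmxA -rowE.
    have -> : row i c = (c i 0)%:M by apply/matrixP => a b; rewrite !ord1 !mxE eqxx mulr1n.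
    by rewrite mul_mx_scalar scalerA mulVf // scale1r.
  case/eqP: v0nz.
  by rewrite -Ev0 E0ur -Mc -mulmxA aM Hc act0.
have surj w : exists X, w = act X v0.
  have Hsub : is_submodule act (fun w => exists X, w = act X v0).
    split.
    + by exists 0; rewrite act0l.
    + by move=> a b [X ->] [Y ->]; exists (X + Y); rewrite aD.
    + by move=> c a [X ->]; exists (c *: X); rewrite aZ.
    + by move=> M a [X ->]; exists (M *m X); rewrite aM.
  case: (Hirr _ Hsub) => [Hz|Hall]; last exact: Hall.
  by case/eqP: v0nz; apply: Hz; exists 1%:M; rewrite a1.
pose y k : 'cV[K]_d.+1 := P *m (A ^+ k *m u).
have y0 : y 0%N = delta_mx 0 0.
  by rewrite /y expr0 mul1mx /u colE mulmxA mulmxV // mul1mx.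
have yS k : y k.+1 = B *m y k.
  rewrite /y /B -!mulmxA mulKmx // exprS -mulmxE !mulmxA //.
have tri k : (k < d.+1)%N ->
    (forall i : 'I_d.+1, (k < i)%N -> y k i 0 = 0) /\
    (forall i : 'I_d.+1, i = k :> nat -> y k i 0 != 0).
  elim: k => [_|k IH Hk].
    rewrite y0; split=> i Hi; rewrite mxE eqxx andbT.
      by have /negPf -> : i != 0 by apply: contraTneq Hi => ->.
    by rewrite (_ : i = 0) ?eqxx ?oner_neq0 //; apply: val_inj.
  have [IH1 IH2] := IH (ltnW Hk).
  pose k' : 'I_d.+1 := Ordinal (ltnW Hk).
  split=> i Hi; rewrite yS mxE.
    apply: big1 => m _; case: (ltnP k m) => km; first by rewrite IH1 // mulr0.
    by rewrite Bz ?mul0r // (leq_ltn_trans _ Hi).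
  rewrite (bigD1 k') //= big1 ?addr0.
    by rewrite mulf_neq0 // ?Bnz ?IH2.
  move=> m mk; case: (ltnP k m) => km; first by rewrite IH1 // mulr0.
  rewrite Bz ?mul0r // Hi ltnS ltn_neqAle km andbT.
  by apply: contra mk => /eqP mk; apply/eqP/val_inj.
pose U : 'M[K]_d.+1 := \matrix_(i, k) (A ^+ k *m u) i 0.
have YE (i k : 'I_d.+1) : (P *m U) i k = y k i 0.
  by rewrite !mxE; apply: eq_bigr => j _; rewrite mxE.
have Uu : U \in unitmx.
  have Yu : P *m U \in unitmx.
    rewrite -unitmx_tr unitmxE det_trig.
      rewrite unitfE; apply/prodf_neq0 => i _.
      by rewrite mxE YE; case: (tri i (ltn_ord i)) => _ ->.
    apply/is_trig_mxP => i j ij; rewrite mxE YE.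
    by case: (tri i (ltn_ord i)) => -> .
  by move: Yu; rewrite unitmx_mul => /andP [].
have colU (c : 'cV[K]_d.+1) :
    (U *m c) = \sum_(k < d.+1) c k 0 *: (A ^+ k *m u).
  apply/matrixP => a b; rewrite ord1 summxE !mxE; apply: eq_bigr => j _.
  by rewrite !mxE mulrC.
split; last first.
  move=> w; have [X ->] := surj w.
  pose c := X *m u; pose wv := invmx U *m c.
  pose q := \sum_(k < d.+1) (wv k 0)%:P * 'X^k.
  exists (horner_mx A q); first by exists q.
  have hq : horner_mx A q *m u = c.
    rewrite -(mulKVmx Uu c) -/wv colU /q rmorph_sum mulmx_suml; apply: eq_bigr => k _.
    by rewrite rmorphM /= horner_mx_C rmorphXn /= horner_mx_X -mulmxE -mulmxA mul_scalar_mx.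
  by rewrite actX hq /c -actX.
move=> X Y [p ->] [q ->] Hpq.
apply/subr0_eq; rewrite -rmorphB.
pose Z := horner_mx A (p - q).
have hZ : Z = horner_mx A p - horner_mx A q by rewrite /Z rmorphB.
have actZ : act Z v0 = 0.
  have := aD Z (horner_mx A q) v0; rewrite hZ subrK Hpq => /eqP.
  by rewrite -subr_eq subrr eq_sym => /eqP.
have Zu : Z *m u = 0.
  apply/eqP/negP => /negP nz; have := psi_inj _ nz.
  by rewrite -actX actZ eqxx.
have ZU : Z *m U = 0.
  apply/matrixP => a k; rewrite [RHS]mxE.
  transitivity ((Z *m (A ^+ k *m u)) a 0).
    by rewrite !mxE; apply: eq_bigr => j _; rewrite mxE.
  have hX : horner_mx A ('X^k) = A ^+ k by rewrite rmorphXn /= horner_mx_X.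
  have comm : Z *m A ^+ k = A ^+ k *m Z.
    by rewrite -hX /Z mulmxE -!rmorphM mulrC.
  by rewrite mulmxA comm -mulmxA Zu mulmx0 mxE.
by rewrite -[LHS]/Z -(mulmxK Uu Z) ZU mul0mx.
Qed.
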